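(* In $\mathbb{R}^3$ with coordinates $(x_1,y_1,y_2)$, let $M=\{y_1=y_2=0\}$ (coordinate $x_1$) and $N=\{y_1=0\}$ (coordinates $(x_1,y_2)$). Let $\psi\in C_0^\infty([-1,1])$ be even, $\psi\ge0$, with $\frac{1}{\sqrt{2\pi}}\int_{-1}^1\psi(\theta)\,d\theta=1$, set $\chi(\xi,\eta')=\psi(\eta'/|\xi|)\frac{1}{|\xi|}$, and define for functions $w$ on $M$ $$E(w)(x_1,y_2):=\frac{1}{2\pi}\iint e^{i(\xi x_1+\eta' y_2)}\hat w(\xi)\chi(\xi,\eta')\,d\eta'\,d\xi.$$ Then $E$ is bounded $\dot H^{-1/2}(M)\to L^2(N)$ and bounded $(\dot H^{-1/2}\cap H^{m-1/2})(M)\to H^m(N)$. In addition, if $w\in\dot H^{-3/2}(M)$ then $y_2E(w)\in L^2(N)$, and the map $w\mapsto y_2E(w)$ is bounded $(\dot H^{-3/2}\cap H^{m-3/2})(M)\to H^m(N)$.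
   Context: $\hat w(\xi)=(2\pi)^{-1/2}\int e^{-i\xi x_1}w(x_1)dx_1$. $\dot H^s$ is the homogeneous Sobolev space with norm $\|w\|_{\dot H^s}^2=\int|\xi|^{2s}|\hat w(\xi)|^2d\xi$; $H^s$ is the inhomogeneous Sobolev space with norm $\int(1+|\xi|^2)^s|\hat w|^2d\xi$ (on $N$, with the analogous norm in two variables). $m\ge 0$ is an integer. *)

(* Defs.v *)
From HB Require Import structures.
From mathcomp Require Import all_boot all_order all_algebra.
From mathcomp Require Import all_classical all_reals all_analysis.
Set Implicit Arguments. Unset Strict Implicit. Unset Printing Implicit Defensive.
Import Order.TTheory GRing.Theory Num.Theory.
Import numFieldNormedType.Exports.
Local Open Scope classical_set_scope.
Local Open Scope ring_scope.

(* Complex numbers are represented by pairs (real part, imaginary part). *)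
Definition cmod2 {R : realType} (z : R * R) : R := z.1 ^+ 2 + z.2 ^+ 2.

Section Defs.
Variable R : realType.

Definition leb1 := (@lebesgue_measure R).
Definition leb2 := (@lebesgue_measure R \x @lebesgue_measure R)%E.

(* Fourier data on M = R (coordinate x1): w is described by its Fourier
   transform  hat w : R -> C. *)
Definition fmeas (wh : R -> R * R) :=
  measurable_fun setT (fun x => (wh x).1) /\ measurable_fun setT (fun x => (wh x).2).

Definition Hdot_norm2 (s : R) (wh : R -> R * R) : \bar R :=
  (\int[leb1]_xi ((`|xi| `^ (2 * s)) * cmod2 (wh xi))%:E)%E.

Definition H1_norm2 (s : R) (wh : R -> R * R) : \bar R :=
  (\int[leb1]_xi (((1 + xi ^+ 2) `^ s) * cmod2 (wh xi))%:E)%E.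

(* ||f||_{H^s(N)}^2 = \iint (1+|xi|^2+|eta'|^2)^s |hat f(xi,eta')|^2,
   f given by its 2-d Fourier transform fh; L^2(N) = H^0(N) (Plancherel). *)
Definition H2_norm2 (s : R) (fh : R * R -> R * R) : \bar R :=
  (\int[leb2]_p (((1 + p.1 ^+ 2 + p.2 ^+ 2) `^ s) * cmod2 (fh p))%:E)%E.

Definition smooth_supp1 (psi : R -> R) :=
  (forall n x, derivable (derive1n n psi) x 1) /\
  (forall t, 1 < `|t| -> psi t = 0).

Definition chi (psi : R -> R) (xi eta : R) : R := psi (eta / `|xi|) / `|xi|.

(* Fourier transform of E(w): (xi,eta') |-> hat w(xi) chi(xi,eta'),
   since E(w) = (2 pi)^{-1} \iint e^{i(x1 xi + y2 eta')} hat w(xi) chi(xi,eta'). *)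
Definition E_hat (psi : R -> R) (wh : R -> R * R) (p : R * R) : R * R :=
  ((wh p.1).1 * chi psi p.1 p.2, (wh p.1).2 * chi psi p.1 p.2).

(* Fourier transform of y2 E(w): i d/deta' [hat w(xi) chi(xi,eta')]
   = i hat w(xi) (d/deta' chi)(xi,eta');  i (a + i b) c = (-b c) + i (a c). *)
Definition y2E_hat (psi : R -> R) (wh : R -> R * R) (p : R * R) : R * R :=
  let d := derive1 (chi psi p.1) p.2 in
  (- (wh p.1).2 * d, (wh p.1).1 * d).

End Defs.

(* Main.v *)
Require Import Defs.
From HB Require Import structures.
From mathcomp Require Import all_boot all_order all_algebra.
From mathcomp Require Import all_classical all_reals all_analysis.
From mathcomp Require Import measurable_realfun.
From mathcomp Require Import ring lra.
Import Order.TTheory GRing.Theory Num.Theory.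
Import numFieldNormedType.Exports.
Local Open Scope classical_set_scope.
Local Open Scope ring_scope.
Section S.
Context (R : realType).
Local Open Scope ereal_scope.
Lemma tonelli_bound (g : R -> R) (mg : measurable_fun setT g) (g0 : forall x, (0 <= g x)%R) :
  \int[@leb2 R]_p (g p.1 * \1_[set p : R*R | `|p.2| <= `|p.1|] p)%:E
  = \int[@leb1 R]_xi (g xi * (2 * `|xi|))%:E.
Proof.
rewrite /leb2 fubini_tonelli1 //; last first.
- move=> p; rewrite lee_fin mulr_ge0 //.
- apply/measurable_EFinP; apply: measurable_funM.
    exact: measurableT_comp mg measurable_fst.
  apply: measurable_indic.
  have := @measurable_fun_ler _ _ _ setT (fun p : R * R => `|p.2|%R) (fun p : R * R => `|p.1|%R).
  move=> /(_ (measurableT_comp (@normr_measurable _ _) measurable_snd)).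
  move=> /(_ (measurableT_comp (@normr_measurable _ _) measurable_fst)).
  move=> /(_ measurableT [set true] I).
  by rewrite setTI.
apply: eq_integral => xi _.
rewrite /fubini_F /=.
have -> : (fun y => (g xi * \1_[set p : R * R | `|p.2| <= `|p.1|] (xi, y))%:E)
   = (fun y => (g xi)%:E * (\1_(`[(- `|xi|)%R, `|xi|%R]%classic) y)%:E).
  apply/funext => y; rewrite /indic /=.
  rewrite (_ : ((xi, y) \in _) = (y \in `[(- `|xi|)%R, `|xi|%R]%classic)); first by rewrite EFinM.
  apply/idP/idP => /set_mem H; apply/mem_set; move: H => /=; by rewrite in_itv /= -ler_norml.
rewrite ge0_integralZl_EFin //=; last first.
  by apply/measurable_EFinP; exact: measurable_indic.
rewrite integral_indic // setIT.
transitivity ((g xi)%:E * (@lebesgue_measure R [set` `[(- `|xi|)%R, `|xi|%R]])); first by [].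
rewrite lebesgue_measure_itv /= lte_fin.
case: ifPn => h.
  by rewrite -EFinD -EFinM opprK mulr2n mulrDl mul1r.
have -> : `|xi|%R = 0%R.
  move: h; rewrite -leNgt => h.
  apply/le_anti; rewrite normr_ge0 andbT.
  have := normr_ge0 xi; lra.
by rewrite !mulr0 mule0.
Qed.

Local Close Scope ereal_scope.
Lemma le_int_nm (f g : R * R -> \bar R) : (forall x, (0 <= f x)%E) -> (forall x, (f x <= g x)%E) ->
  (\int[@leb2 R]_x f x <= \int[@leb2 R]_x g x)%E.
Proof.
move=> f0 fg.
have g0 : forall x, (0 <= g x)%E by move=> x; exact: le_trans (f0 x) (fg x).
rewrite !ge0_integralTE//.
apply: le_ereal_sup => _ [h hf <-]; exists h => //= x.
exact: le_trans (hf x) (fg x).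
Qed.

Lemma H2_bound (wh : R -> R * R) (F : R * R -> R * R) (h : R -> R -> R) (K : R) (j m : nat) :
  fmeas wh -> 0 <= K -> (0 < j)%N ->
  (forall p, cmod2 (F p) = cmod2 (wh p.1) * h p.1 p.2 ^+ 2) ->
  (forall xi eta : R, h xi eta ^+ 2 <= (if `|eta| <= `|xi| then K / `|xi| ^+ (2 * j) else 0)) ->
  (H2_norm2 m%:R F <= \int[@leb1 R]_xi
     (2 ^+ m * K * ((1 + xi ^+ 2) ^+ m * cmod2 (wh xi)) * `|xi| `^ (- (2 * j)%:R) * (2 * `|xi|))%:E)%E.
Proof.
move=> [fm1 fm2] K0 j0 hF hh.
set g := fun xi : R => 2 ^+ m * K * ((1 + xi ^+ 2) ^+ m * cmod2 (wh xi)) * `|xi| `^ (- (2 * j)%:R).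
have c0 : forall xi, 0 <= cmod2 (wh xi) by move=> xi; rewrite /cmod2 addr_ge0 ?sqr_ge0.
have g0 : forall xi, 0 <= g xi.
  move=> xi; rewrite /g !mulr_ge0 ?exprn_ge0 ?powR_ge0 ?c0 //.
  by rewrite addr_ge0 ?sqr_ge0.
have mg : measurable_fun setT g.
  apply: measurable_funM; last first.
    exact: measurableT_comp (measurable_powR _) (@normr_measurable _ _).
  apply: measurable_funM; first exact: measurable_cst.
  apply: measurable_funM.
    apply: measurable_funX; apply: measurable_funD; first exact: measurable_cst.
    exact: exprn_measurable.
  by apply: measurable_funD; apply: measurable_funX.
rewrite (_ : (fun xi => _) = (fun xi => (g xi * (2 * `|xi|))%:E)) // -(tonelli_bound g mg g0).
rewrite /H2_norm2; apply: le_int_nm.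
  by move=> p; rewrite lee_fin mulr_ge0 ?powR_ge0 // hF mulr_ge0 ?c0 ?sqr_ge0.
move=> [xi eta]; rewrite lee_fin /= hF /=.
have := hh xi eta.
rewrite /indic /=.
have -> : ((xi, eta) \in [set p : R * R | `|p.2| <= `|p.1|]) = (`|eta| <= `|xi|).
  by apply/idP/idP => [/set_mem //|H]; exact: mem_set.
have W0 : 0 <= 1 + xi ^+ 2 + eta ^+ 2 by rewrite !addr_ge0 ?sqr_ge0.
rewrite powR_mulrn //.
case: ifPn => he hb; last first.
  have h0 : h xi eta ^+ 2 = 0 by apply/le_anti; rewrite hb sqr_ge0.
  by rewrite h0 !mulr0.
rewrite mulr1 /g.
have hW : (1 + xi ^+ 2 + eta ^+ 2) ^+ m <= 2 ^+ m * (1 + xi ^+ 2) ^+ m.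
  rewrite -exprMn; apply: lerXn2r; rewrite ?nnegrE //.
    by rewrite mulr_ge0 // addr_ge0 ?sqr_ge0.
  have : eta ^+ 2 <= xi ^+ 2.
    by rewrite -real_normK ?num_real // -[xi ^+ 2]real_normK ?num_real // lerXn2r ?nnegrE.
  have := sqr_ge0 xi; lra.
have hb' : h xi eta ^+ 2 <= K * `|xi| `^ (- (2 * j)%:R).
  by rewrite powR_invn.
set p := `|xi| `^ _.
have -> : 2 ^+ m * K * ((1 + xi ^+ 2) ^+ m * cmod2 (wh xi)) * p
  = (2 ^+ m * (1 + xi ^+ 2) ^+ m) * (cmod2 (wh xi) * (K * p)) by ring.
apply: ler_pM => //.
- by rewrite exprn_ge0.
- by rewrite mulr_ge0 ?c0 ?sqr_ge0.
- by apply: ler_wpM2l.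
Qed.
Lemma kern_sq (f : R -> R) K j : (0 < j)%N -> (forall t, f t ^+ 2 <= K) ->
  (forall t, 1 < `|t| -> f t = 0) -> forall xi eta : R,
  (f (eta / `|xi|) / `|xi| ^+ j) ^+ 2 <= (if `|eta| <= `|xi| then K / `|xi| ^+ (2 * j) else 0).
Proof.
move=> j0 hK hz xi eta.
rewrite expr_div_n -exprM mulnC.
case: ifPn => he.
  apply: ler_wpM2r => //; rewrite invr_ge0 exprn_ge0 //.
have [->|xi0] := eqVneq xi 0.
  by rewrite normr0 expr0n muln_eq0 /= (negbTE (lt0n_neq0 j0)) /= invr0 mulr0.
rewrite hz ?expr0n ?mul0r //.
rewrite normf_div normr_id.
rewrite ltr_pdivlMr; last by rewrite normr_gt0.
by rewrite mul1r ltNge.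
Qed.

Lemma wbound (x r : R) (m j : nat) : 0 < r -> 2 * r = (2*j)%:R - 1 ->
  (1 + x^+2)^+m * `|x| `^ (- (2*j)%:R) * `|x| <=
  (2^+m + 2 `^ r) * (`|x| `^ (2 * - r) + (1+x^+2) `^ (m%:R - r)).
Proof.
move=> r0 hr.
set A := 1 + x^+2.
have A1 : 1 <= A by rewrite /A lerDl sqr_ge0.
have A0 : 0 < A by apply: lt_le_trans A1.
have c0 : 0 <= 2^+m + 2 `^ r :> R by rewrite addr_ge0 ?exprn_ge0 ?powR_ge0.
have [->|x0] := eqVneq x 0.
  rewrite normr0 mulr0; apply: mulr_ge0 => //; apply: addr_ge0; exact: powR_ge0.
set y := `|x|.
have y0 : 0 < y by rewrite normr_gt0.
have hx2 : x ^+ 2 = y ^+ 2 by rewrite /y real_normK ?num_real.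
have E : y `^ (- (2*j)%:R) * y = y `^ (2 * - r).
  rewrite -[X in _ * X]powRr1 ?ltW // -powRD; last by apply/implyP => _; rewrite gt_eqF.
  congr (_ `^ _); rewrite mulrN hr; ring.
rewrite -mulrA E.
case: (ltrP y 1) => hy.
  have hA : A ^+ m <= 2 ^+ m.
    apply: lerXn2r; rewrite ?nnegrE ?(ltW A0) //; rewrite /A hx2.
    have : y ^+ 2 <= 1. rewrite -(expr1n R 2); apply: lerXn2r; rewrite ?nnegrE ?ltW //.
    lra.
  have p0 : 0 <= y `^ (2 * - r) := powR_ge0 _ _.
  have q0 : 0 <= A `^ (m%:R - r) := powR_ge0 _ _.
  have p1 : 0 <= 2 `^ r :> R := powR_ge0 _ _.
  nra.
have key : y `^ (2 * - r) <= 2 `^ r * A `^ (- r).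
  rewrite powRrM (_ : y `^ 2 = y ^+ 2); last by rewrite -powR_mulrn // ltW.
  rewrite -hx2 !powRN.
  have hb : A `^ r <= (2 * x ^+ 2) `^ r.
    apply: (ge0_ler_powR (ltW r0)); rewrite ?nnegrE.
    - exact: ltW.
    - by rewrite mulr_ge0 ?sqr_ge0.
    - rewrite /A hx2; nra.
  rewrite powRM ?sqr_ge0 // in hb.
  have a0 : 0 < (x ^+ 2) `^ r by apply: powR_gt0; rewrite hx2 exprn_gt0.
  have b0 : 0 < A `^ r by apply: powR_gt0.
  rewrite ler_pdivlMr // mulrC ler_pdivrMr //.
have q0 : 0 <= A `^ (m%:R - r) := powR_ge0 _ _.
have p1 : 0 <= 2 `^ r :> R := powR_ge0 _ _.
have p0 : 0 <= y `^ (2 * - r) := powR_ge0 _ _.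
have eq : A ^+ m * (2 `^ r * A `^ (- r)) = 2 `^ r * A `^ (m%:R - r).
  rewrite -(powR_mulrn _ (ltW A0)) mulrCA -powRD; last by apply/implyP => _; rewrite gt_eqF.
  by [].
have : A ^+ m * y `^ (2 * - r) <= A ^+ m * (2 `^ r * A `^ (- r)).
  by apply: ler_wpM2l => //; rewrite exprn_ge0 // ltW.
rewrite eq => h.
have h2m : 0 <= 2 ^+ m :> R by rewrite exprn_ge0.
nra.
Qed.

Lemma near_gt1 (t : R) : 1 < `|t| -> \forall u \near t, 1 < `|u|.
Proof.
move=> t1; apply/nbhs_ballP; exists (`|t| - 1) => /=; first by rewrite subr_gt0.
move=> u; rewrite /ball /= => h.
have h1 := ler_dist_dist t u; have h2 := ler_norm (`|t| - `|u|); lra.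
Qed.

Lemma cont_of_smooth (psi : R -> R) n : smooth_supp1 psi -> continuous (derive1n n psi).
Proof.
case=> hd _ x; apply: differentiable_continuous; apply/derivable1_diffP; exact: hd.
Qed.

Lemma dpsi_zero (psi : R -> R) : (forall t, 1 < `|t| -> psi t = 0) ->
  forall t, 1 < `|t| -> derive1 psi t = 0.
Proof.
move=> hz t t1; rewrite derive1E (@near_eq_derive _ _ _ psi (cst 0)) ?derive_cst //.
by near=> u; apply: hz; near: u; exact: near_gt1.
Unshelve. all: by end_near. Qed.

Lemma bnd_sq (f : R -> R) : continuous f -> (forall t, 1 < `|t| -> f t = 0) ->
  exists K, 0 <= K /\ forall t, f t ^+ 2 <= K.
Proof.
move=> cf hz.
have [c _ hc] := @EVT_max R (fun t => f t ^+ 2) (-1) 1 ltac:(lra) ltac:(apply: continuous_subspaceT => x; apply: continuousM; exact: cf).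
exists (f c ^+ 2); split; first exact: sqr_ge0.
move=> t; case: (lerP `|t| 1) => ht.
  by apply: hc; rewrite in_itv /= -ler_norml.
by rewrite hz // expr0n /= sqr_ge0.
Qed.

Lemma dchi (psi : R -> R) : (forall x, derivable psi x 1) -> forall xi eta,
  derive1 (chi psi xi) eta = derive1 psi (eta / `|xi|) / `|xi| ^+ 2.
Proof.
move=> hd xi eta.
have [->|xi0] := eqVneq xi 0.
  rewrite normr0 expr0n /= invr0 mulr0.
  have -> : chi psi 0 = cst 0 by apply/funext => e; rewrite /chi normr0 invr0 mulr0.
  by rewrite derive1_cst.
set c := `|xi|^-1.
have -> : chi psi xi = c \*: (psi \o (c \*: id)).
  by apply/funext => e; rewrite /chi /= mulrC [e * _]mulrC.
have hid : is_derive eta 1 (c \*: id) (c *: (1:R)) := is_deriveZ c (is_derive_id eta 1).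
have hpsi : is_derive ((c \*: id) eta) 1 psi (derive1 psi ((c \*: id) eta)).
  by rewrite derive1E; apply: derivableP; exact: hd.
have := is_deriveZ c (is_derive1_comp hpsi hid).
move=> H; rewrite derive1E (@derive_val _ _ _ _ _ _ _ H) /= /c.
have E : forall a b : R, a *: b = a * b by [].
rewrite !E mulr1 [eta / _]mulrC expr2 invfM.
by rewrite mulrCA mulrA.
Qed.

Lemma le_int_gen (d : measure_display) (T : measurableType d) (mu : {measure set T -> \bar R})
  (f g : T -> \bar R) : (forall x, (0 <= f x)%E) -> (forall x, (f x <= g x)%E) ->
  (\int[mu]_x f x <= \int[mu]_x g x)%E.
Proof.
move=> f0 fg.
have g0 : forall x, (0 <= g x)%E by move=> x; exact: le_trans (f0 x) (fg x).
rewrite !ge0_integralTE//.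
apply: le_ereal_sup => _ [h hf <-]; exists h => //= x.
exact: le_trans (hf x) (fg x).
Qed.

Lemma powE (x r : R) (j : nat) : (0 < j)%N -> 2 * r = (2 * j)%:R - 1 ->
  `|x| `^ (- (2 * j)%:R) * `|x| = `|x| `^ (2 * - r).
Proof.
move=> j0 hr.
have h2 : (2 : R) <= (2 * j)%:R.
  have : (2 <= 2 * j)%N by exact: leq_pmulr.
  by rewrite -(ler_nat R).
have [->|x0] := eqVneq x 0.
  rewrite normr0 mulr0 powR0 //; rewrite mulrN hr; apply/eqP => h; lra.
have y0 : 0 < `|x| by rewrite normr_gt0.
rewrite -[X in _ * X]powRr1 ?ltW // -powRD; last by apply/implyP => _; rewrite gt_eqF.
congr (_ `^ _); rewrite mulrN hr; ring.
Qed.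

Lemma mc2 (wh : R -> R * R) : fmeas wh -> measurable_fun setT (fun xi => cmod2 (wh xi)).
Proof. by case=> m1 m2; apply: measurable_funD; apply: measurable_funX. Qed.

Lemma final0 (wh : R -> R * R) (K r : R) (j : nat) : fmeas wh -> 0 <= K -> (0 < j)%N ->
  2 * r = (2 * j)%:R - 1 ->
  (\int[@leb1 R]_xi (2 ^+ 0 * K * ((1 + xi ^+ 2) ^+ 0 * cmod2 (wh xi)) *
      `|xi| `^ (- (2 * j)%:R) * (2 * `|xi|))%:E <= (2 * K)%:E * Hdot_norm2 (- r) wh)%E.
Proof.
move=> fm K0 j0 hr.
have c0 : forall xi, 0 <= cmod2 (wh xi) by move=> xi; rewrite /cmod2 addr_ge0 ?sqr_ge0.
rewrite /Hdot_norm2 -ge0_integralZl_EFin //; last 3 first.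
- by move=> x _; rewrite lee_fin mulr_ge0 ?powR_ge0.
- apply/measurable_EFinP; apply: measurable_funM; last exact: mc2.
  exact: measurableT_comp (measurable_powR _) (@normr_measurable _ _).
- by rewrite mulr_ge0.
apply: le_int_gen.
  by move=> x; rewrite lee_fin !mulr_ge0 ?powR_ge0 ?c0 ?exprn_ge0 // addr_ge0 ?sqr_ge0.
move=> x; rewrite -EFinM lee_fin -(@powE x r j j0 hr) !expr0 !mul1r.
rewrite le_eqVlt; apply/orP; left; apply/eqP; ring.
Qed.

Lemma finalm (wh : R -> R * R) (K r : R) (j m : nat) : fmeas wh -> 0 <= K -> (0 < j)%N ->
  0 < r -> 2 * r = (2 * j)%:R - 1 ->
  (\int[@leb1 R]_xi (2 ^+ m * K * ((1 + xi ^+ 2) ^+ m * cmod2 (wh xi)) *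
      `|xi| `^ (- (2 * j)%:R) * (2 * `|xi|))%:E <=
   (2 * 2 ^+ m * K * (2 ^+ m + 2 `^ r))%:E * (Hdot_norm2 (- r) wh + H1_norm2 (m%:R - r) wh))%E.
Proof.
move=> fm K0 j0 r0 hr.
have c0 : forall xi, 0 <= cmod2 (wh xi) by move=> xi; rewrite /cmod2 addr_ge0 ?sqr_ge0.
have cc0 : 0 <= 2 ^+ m + 2 `^ r :> R by rewrite addr_ge0 ?exprn_ge0 ?powR_ge0.
rewrite /Hdot_norm2 /H1_norm2 -ge0_integralD //; last 4 first.
- by move=> x _; rewrite lee_fin mulr_ge0 ?powR_ge0.
- apply/measurable_EFinP; apply: measurable_funM; last exact: mc2.
  exact: measurableT_comp (measurable_powR _) (@normr_measurable _ _).
- by move=> x _; rewrite lee_fin mulr_ge0 ?powR_ge0.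
- apply/measurable_EFinP; apply: measurable_funM; last exact: mc2.
  apply: measurableT_comp (measurable_powR _) _.
  by apply: measurable_funD; [exact: measurable_cst | exact: exprn_measurable].
rewrite -ge0_integralZl_EFin //; last 3 first.
- by move=> x _; rewrite adde_ge0 // lee_fin mulr_ge0 ?powR_ge0.
- apply: emeasurable_funD; apply/measurable_EFinP; apply: measurable_funM; try exact: mc2.
    exact: measurableT_comp (measurable_powR _) (@normr_measurable _ _).
  apply: measurableT_comp (measurable_powR _) _.
  by apply: measurable_funD; [exact: measurable_cst | exact: exprn_measurable].
- by rewrite !mulr_ge0 ?exprn_ge0.
apply: le_int_gen.
  by move=> x; rewrite lee_fin !mulr_ge0 ?powR_ge0 ?c0 ?exprn_ge0 // addr_ge0 ?sqr_ge0.
move=> x; rewrite -EFinD -EFinM lee_fin.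
have hw := @wbound x r m j r0 hr.
set A := 1 + x ^+ 2 in hw *.
set p := `|x| `^ (- (2 * j)%:R) in hw *.
set q := `|x| `^ (2 * - r) in hw *.
set w := A `^ (m%:R - r) in hw *.
set cc := 2 ^+ m + 2 `^ r in hw cc0 *.
have k0 : 0 <= 2 * 2 ^+ m * K * cmod2 (wh x) by rewrite !mulr_ge0 ?exprn_ge0.
have := ler_wpM2l k0 hw.
have -> : 2 * 2 ^+ m * K * cmod2 (wh x) * (A ^+ m * p * `|x|) =
  2 ^+ m * K * (A ^+ m * cmod2 (wh x)) * p * (2 * `|x|) by ring.
have -> : 2 * 2 ^+ m * K * cmod2 (wh x) * (cc * (q + w)) =
  2 * 2 ^+ m * K * cc * (q * cmod2 (wh x) + w * cmod2 (wh x)) by ring.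
by [].
Qed.
End S.

Theorem theorem4 (R : realType) (psi : R -> R) (m : nat) :
  smooth_supp1 psi ->
  (forall t, psi (- t) = psi t) ->
  (forall t, 0 <= psi t) ->
  (\int[@leb1 R]_(t in `[(-1)%R, 1%R]) (psi t)%:E = (Num.sqrt (2 * pi))%:E)%E ->
  (* E : \dot H^{-1/2}(M) -> L^2(N) bounded *)
  (exists C : R, 0 <= C /\ forall wh : R -> R * R, fmeas wh ->
     (Hdot_norm2 (- (1/2)) wh < +oo)%E ->
     (H2_norm2 0 (E_hat psi wh) <= C%:E * Hdot_norm2 (- (1/2)) wh)%E) /\
  (* E : (\dot H^{-1/2} \cap H^{m-1/2})(M) -> H^m(N) bounded *)
  (exists C : R, 0 <= C /\ forall wh : R -> R * R, fmeas wh ->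
     (Hdot_norm2 (- (1/2)) wh < +oo)%E ->
     (H1_norm2 (m%:R - 1/2) wh < +oo)%E ->
     (H2_norm2 m%:R (E_hat psi wh) <=
        C%:E * (Hdot_norm2 (- (1/2)) wh + H1_norm2 (m%:R - 1/2) wh))%E) /\
  (* w in \dot H^{-3/2}(M) -> y2 E(w) in L^2(N) *)
  (forall wh : R -> R * R, fmeas wh ->
     (Hdot_norm2 (- (3/2)) wh < +oo)%E ->
     (H2_norm2 0 (y2E_hat psi wh) < +oo)%E) /\
  (* w |-> y2 E(w) : (\dot H^{-3/2} \cap H^{m-3/2})(M) -> H^m(N) bounded *)
  (exists C : R, 0 <= C /\ forall wh : R -> R * R, fmeas wh ->
     (Hdot_norm2 (- (3/2)) wh < +oo)%E ->
     (H1_norm2 (m%:R - 3/2) wh < +oo)%E ->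
     (H2_norm2 m%:R (y2E_hat psi wh) <=
        C%:E * (Hdot_norm2 (- (3/2)) wh + H1_norm2 (m%:R - 3/2) wh))%E).
Proof.
move=> hs _ _ _.
have [hd hz] := hs.
have cpsi : continuous psi := @cont_of_smooth R psi 0 hs.
have cdpsi : continuous (derive1 psi) := @cont_of_smooth R psi 1 hs.
have [K [K0 hK]] := @bnd_sq R _ cpsi hz.
have [K' [K'0 hK']] := @bnd_sq R _ cdpsi (@dpsi_zero R _ hz).
have hchi : forall xi eta : R, chi psi xi eta ^+ 2 <=
    (if `|eta| <= `|xi| then K / `|xi| ^+ (2 * 1) else 0).
  by move=> xi eta; have := @kern_sq R _ _ _ (isT : (0 < 1)%N) hK hz xi eta; rewrite expr1.
have hdchi : forall xi eta : R, derive1 (chi psi xi) eta ^+ 2 <=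
    (if `|eta| <= `|xi| then K' / `|xi| ^+ (2 * 2) else 0).
  move=> xi eta; rewrite (@dchi R psi); last exact: (hd 0%N).
  exact: (@kern_sq R _ _ _ (isT : (0 < 2)%N) hK' (@dpsi_zero R _ hz)) xi eta.
have hE : forall wh p, cmod2 (E_hat psi wh p) = cmod2 (wh p.1) * chi psi p.1 p.2 ^+ 2.
  by move=> wh p; rewrite /cmod2 /E_hat /=; ring.
have hY : forall wh p, cmod2 (y2E_hat psi wh p) =
    cmod2 (wh p.1) * derive1 (chi psi p.1) p.2 ^+ 2.
  by move=> wh p; rewrite /cmod2 /y2E_hat /=; ring.
have r1 : 2 * (1/2 : R) = (2 * 1)%:R - 1 by rewrite /=; field.
have r3 : 2 * (3/2 : R) = (2 * 2)%:R - 1 by rewrite /=; field.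
have r1p : 0 < (1/2 : R) by rewrite divr_gt0.
have r3p : 0 < (3/2 : R) by rewrite divr_gt0.
split.
  exists (2 * K); split; first by rewrite mulr_ge0.
  move=> wh fm _.
  apply: le_trans (@H2_bound R _ _ _ _ _ 0 fm K0 (isT : (0 < 1)%N) (hE wh) hchi) _.
  exact: (@final0 R _ _ _ _ fm K0 _ r1).
split.
  exists (2 * 2 ^+ m * K * (2 ^+ m + 2 `^ (1/2))); split.
    by rewrite !mulr_ge0 ?exprn_ge0 // addr_ge0 ?exprn_ge0 ?powR_ge0.
  move=> wh fm _ _.
  apply: le_trans (@H2_bound R _ _ _ _ _ m fm K0 (isT : (0 < 1)%N) (hE wh) hchi) _.
  exact: (@finalm R _ _ _ _ _ fm K0 _ r1p r1).
split.
  move=> wh fm hfin.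
  apply: le_lt_trans (@H2_bound R _ _ _ _ _ 0 fm K'0 (isT : (0 < 2)%N) (hY wh) hdchi) _.
  apply: le_lt_trans (@final0 R _ _ _ _ fm K'0 _ r3) _ => //.
  apply: lte_mul_pinfty => //; rewrite lee_fin mulr_ge0 //.
exists (2 * 2 ^+ m * K' * (2 ^+ m + 2 `^ (3/2))); split.
  by rewrite !mulr_ge0 ?exprn_ge0 // addr_ge0 ?exprn_ge0 ?powR_ge0.
move=> wh fm _ _.
apply: le_trans (@H2_bound R _ _ _ _ _ m fm K'0 (isT : (0 < 2)%N) (hY wh) hdchi) _.
exact: (@finalm R _ _ _ _ _ fm K'0 _ r3p r3).
Qed.
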